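(* The Top-$t$ Truncated Harmonic rule has utilitarian distortion $O\!\left(\frac{m\sqrt m\,H_t}{t}\right)$.
   Context: Setting: $n$ agents, $m$ alternatives, $1\le t\le m$; each agent has an underlying strict ranking but only her ordered top-$t$ list is reported (top-$t$ profile $\vec\sigma_t$); $r_i(Y)\in\{1,\dots,t\}$ is the reported rank of $Y$ when $Y$ is among $i$'s top $t$; $H_t=\sum_{k=1}^t1/k$. For the reported information, $Y\succ_i\hat X$ holds when $Y$ is among $i$'s top $t$ and either $\hat X$ is not among them or $r_i(Y)<r_i(\hat X)$. Utilitarian framework: $u_i:\mathcal A\to\mathbb R_{\ge0}$ with $\sum_Xu_i(X)=1$; $\vec u$ is consistent with $\vec\sigma_t$ if for some full ranking profile whose top-$t$ prefixes agree with $\vec\sigma_t$, $X\succ_iY\Rightarrow u_i(X)\ge u_i(Y)$. $\mathrm{SW}(X,\vec u)=\sum_iu_i(X)$; utilitarian distortion of $f$: $\sup_{\vec\sigma_t}\sup_{\vec u}\max_X\mathrm{SW}(X,\vec u)/\mathbb E_{X\sim f(\vec\sigma_t)}[\mathrm{SW}(X,\vec u)]$. Top-$t$ Truncated Harmonic rule: fix a deterministic voting rule $g$ on top-$t$ profiles with metric distortion at most $6m/t+1$ (such a rule exists), and let $\hat X=g(\vec\sigma_t)$. Pick an agent $i$ uniformly at random and output $Y$ with probability $p(i,Y)=\frac{1}{2H_t r_i(Y)}$ if $Y\succ_i\hat X$, $p(i,\hat X)=1-\sum_{Y\succ_i\hat X}p(i,Y)$, and $p(i,Y)=0$ otherwise.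 *)

(* Defs.v *)
From HB Require Import structures.
From mathcomp Require Import all_boot all_order all_algebra all_fingroup.
Set Implicit Arguments. Unset Strict Implicit. Unset Printing Implicit Defensive.
Import Order.TTheory GRing.Theory Num.Theory.
Local Open Scope ring_scope.

(* Agents are 'I_n, alternatives are 'I_m.
   A top-t list is an (injective) map from positions 'I_t (0-based) to alternatives. *)
Definition topt_list (m t : nat) := {ffun 'I_t -> 'I_m}.
Definition topt_profile (n m t : nat) := {ffun 'I_n -> {ffun 'I_t -> 'I_m}}.

Definition valid_topt n m t (s : topt_profile n m t) : Prop :=
  forall i : 'I_n, injective (s i).

Definition in_top m t (l : {ffun 'I_t -> 'I_m}) (Y : 'I_m) : bool := Y \in codom l.
(* 0-based reported position; the reported rank r_i(Y) is tpos + 1 *)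
Definition tpos m t (l : {ffun 'I_t -> 'I_m}) (Y : 'I_m) : nat := index Y (codom l).
Definition trank m t (l : {ffun 'I_t -> 'I_m}) (Y : 'I_m) : nat := (tpos l Y).+1.

Definition rep_pref m t (l : {ffun 'I_t -> 'I_m}) (Y X : 'I_m) : bool :=
  in_top l Y && (~~ in_top l X || (tpos l Y < tpos l X)%N).

(* Full ranking profile: pi i k = the alternative at (0-based) position k of agent i. *)
Definition full_profile (n m : nat) := 'I_n -> {perm 'I_m}.
Definition fpos m (p : {perm 'I_m}) (X : 'I_m) : nat := val ((p^-1)%g X).

Definition extends n m t (s : topt_profile n m t) (pi : full_profile n m) : Prop :=
  forall (i : 'I_n) (k : 'I_t), fpos (pi i) (s i k) = val k.

Definition harm {R : numFieldType} (t : nat) : R := \sum_(k < t) (k.+1)%:R^-1.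

Definition is_utility {R : numFieldType} n m (u : 'I_n -> 'I_m -> R) : Prop :=
  forall i, (forall X, 0 <= u i X) /\ \sum_(X < m) u i X = 1.

Definition util_consistent {R : numFieldType} n m t (s : topt_profile n m t)
    (u : 'I_n -> 'I_m -> R) : Prop :=
  exists pi : full_profile n m, extends s pi /\
    forall i X Y, (fpos (pi i) X < fpos (pi i) Y)%N -> u i Y <= u i X.

Definition SW {R : numFieldType} n m (u : 'I_n -> 'I_m -> R) (X : 'I_m) : R :=
  \sum_(i < n) u i X.

Definition is_metric {R : numFieldType} n m (d : 'I_n + 'I_m -> 'I_n + 'I_m -> R) : Prop :=
  (forall x, d x x = 0) /\ (forall x y, 0 <= d x y) /\ (forall x y, d x y = d y x) /\
  (forall x y z, d x z <= d x y + d y z).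

Definition metric_consistent {R : numFieldType} n m t (s : topt_profile n m t)
    (d : 'I_n + 'I_m -> 'I_n + 'I_m -> R) : Prop :=
  exists pi : full_profile n m, extends s pi /\
    forall i X Y, (fpos (pi i) X < fpos (pi i) Y)%N -> d (inl i) (inr X) <= d (inl i) (inr Y).

Definition SC {R : numFieldType} n m (d : 'I_n + 'I_m -> 'I_n + 'I_m -> R) (X : 'I_m) : R :=
  \sum_(i < n) d (inl i) (inr X).

Definition metric_distortion_le {R : numFieldType} n m t
    (g : topt_profile n m t -> 'I_m) (D : R) : Prop :=
  forall s, valid_topt s -> forall d, is_metric d -> metric_consistent s d ->
    forall X, SC d (g s) <= D * SC d X.

(* p(i, Y) for reported list l and the g-winner Xh *)
Definition tth_p {R : numFieldType} m t (l : {ffun 'I_t -> 'I_m}) (Xh Y : 'I_m) : R :=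
  if rep_pref l Y Xh then (2 * harm t * (trank l Y)%:R)^-1
  else if Y == Xh then
    1 - \sum_(Z < m | rep_pref l Z Xh) (2 * harm t * (trank l Z)%:R)^-1
  else 0.

(* probability that the rule outputs Y: uniform agent, then p(i, Y) *)
Definition tth {R : numFieldType} n m t (g : topt_profile n m t -> 'I_m)
    (s : topt_profile n m t) (Y : 'I_m) : R :=
  n%:R^-1 * \sum_(i < n) tth_p (s i) (g s) Y.

Definition expected_SW {R : numFieldType} n m t (g : topt_profile n m t -> 'I_m)
    (s : topt_profile n m t) (u : 'I_n -> 'I_m -> R) : R :=
  \sum_(Y < m) tth g s Y * SW u Y.

(* Main.v *)
Require Import Defs.
From HB Require Import structures.
From mathcomp Require Import all_boot all_order all_algebra all_fingroup.
From mathcomp Require Import ring lra.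
Import Order.TTheory GRing.Theory Num.Theory.
Local Open Scope ring_scope.


Lemma cs_sum (R : realFieldType) (k : nat) (x : 'I_k -> R) :
  (\sum_(Y < k) x Y) ^+ 2 <= k%:R * \sum_(Y < k) x Y ^+ 2.
Proof.
set S := \sum_(Y < k) x Y; set Q := \sum_(Y < k) x Y ^+ 2.
have inner : forall Y, \sum_(Z < k) (x Y - x Z) ^+ 2 =
   k%:R * x Y ^+ 2 - 2 * x Y * S + Q.
  move=> Y; under eq_bigr do rewrite sqrrB.
  rewrite big_split /= sumrB sumr_const card_ord.
  have -> : \sum_(i < k) x Y * x i *+ 2 = 2 * x Y * S.
    by rewrite /S mulr_sumr; apply: eq_bigr => Z _; rewrite mulr2n; ring.
  by rewrite [k%:R * _]mulr_natl.
have h0 : 0 <= \sum_(Y < k) \sum_(Z < k) (x Y - x Z) ^+ 2.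
  by apply: sumr_ge0 => Y _; apply: sumr_ge0 => Z _; apply: sqr_ge0.
rewrite (eq_bigr _ (fun Y _ => inner Y)) in h0.
rewrite big_split /= sumrB sumr_const card_ord -mulr_sumr in h0.
rewrite -mulr_suml -/S in h0.
have e1 : \sum_(i < k) 2 * x i = 2 * S by rewrite /S mulr_sumr.
rewrite -/Q e1 -[Q *+ k]mulr_natl in h0.
rewrite expr2; nra.
Qed.

Lemma sq_le (R : rcfType) (a b : R) : 0 <= b -> a ^+ 2 <= b ^+ 2 -> a <= b.
Proof. move=> *; nra. Qed.

Lemma final_alg (R : rcfType) (N T Mm M S E H Wa Wb Wc : R) :
  0 < N -> 1 <= T -> T <= Mm -> 1 <= H -> 0 <= E -> 0 <= M -> 0 <= S ->
  0 <= Wa -> 0 <= Wb -> 0 <= Wc ->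
  Wa <= S -> S <= 2 * E -> Wb * (Wa + (Wb + Wc)) <= 2 * H * N * E ->
  M ^+ 2 <= 2 * H * N * Mm * E -> N <= 2 * H * Mm ^+ 2 * E ->
  T * Wc <= M -> N * T <= 2 * Mm * M + 2 * Mm * T * S ->
  Wa + (Wb + Wc) <= 12 * (Mm * Num.sqrt Mm * H / T) * E.
Proof.
move=> hN hT hTM hH hE hM hS hWa hWb hWc e0 e1 e2 e3 e4 e5 e6.
have hm0 : 0 <= Mm by lra.
set r := Num.sqrt Mm.
have hr2 : r ^+ 2 = Mm by rewrite sqr_sqrtr.
have hr1 : 1 <= r by rewrite -sqrtr1 ler_sqrt //; lra.
have B0 : N * T ^+ 2 <= 32 * H * Mm ^+ 3 * E.
  have [c1|c2] := lerP (N * T) (4 * Mm * M).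
    have h1 : (N * T) ^+ 2 <= (4 * Mm * M) ^+ 2.
      have hNT : 0 <= N * T by apply: mulr_ge0; lra.
      have h4M : 0 <= 4 * Mm * M by apply: mulr_ge0 => //; apply: mulr_ge0; lra.
      by rewrite ler_sqr ?nnegrE.
    have h2 : (4 * Mm * M) ^+ 2 <= 16 * Mm ^+ 2 * (2 * H * N * Mm * E).
      have -> : (4 * Mm * M) ^+ 2 = 16 * Mm ^+ 2 * M ^+ 2 by ring.
      by apply: ler_wpM2l => //; rewrite mulr_ge0 // sqr_ge0.
    have h3 : N * (N * T ^+ 2) <= N * (32 * H * Mm ^+ 3 * E).
      have -> : N * (N * T ^+ 2) = (N * T) ^+ 2 by ring.
      have -> : N * (32 * H * Mm ^+ 3 * E) = 16 * Mm ^+ 2 * (2 * H * N * Mm * E)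
        by ring.
      exact: le_trans h1 h2.
    by rewrite ler_pM2l in h3.
  have h1 : N * T <= (4 * Mm * S) * T by lra.
  rewrite ler_pM2r in h1; last by lra.
  have h2 : N <= 8 * Mm * E by nra.
  have h3 : T ^+ 2 <= Mm ^+ 2.
    by rewrite ler_sqr ?nnegrE //; lra.
  have h4 : 0 <= Mm * E by rewrite mulr_ge0.
  have h5 : N * T ^+ 2 <= 8 * Mm * E * Mm ^+ 2.
    apply: le_trans (ler_wpM2r (sqr_ge0 T) h2) _.
    by apply: ler_wpM2l => //; rewrite -mulrA mulr_ge0.
  apply: le_trans h5 _.
  have -> : 8 * Mm * E * Mm ^+ 2 = 8 * (Mm ^+ 3 * E) by ring.
  have -> : 32 * H * Mm ^+ 3 * E = 32 * H * (Mm ^+ 3 * E) by ring.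
  have h6 : 0 <= Mm ^+ 3 * E by rewrite mulr_ge0 // exprn_ge0.
  nra.
set K := Mm * r * H * E.
have hK0 : 0 <= K by rewrite /K !mulr_ge0 //; lra.
have hb : T * Wb <= 8 * K.
  apply: sq_le; first lra.
  have h1 : Wb ^+ 2 <= 2 * H * N * E.
    apply: le_trans e2; rewrite expr2; apply: ler_wpM2l => //; lra.
  have h2 : (T * Wb) ^+ 2 <= T ^+ 2 * (2 * H * N * E).
    by rewrite exprMn; apply: ler_wpM2l => //; apply: sqr_ge0.
  apply: (le_trans h2).
  have -> : T ^+ 2 * (2 * H * N * E) = (2 * H * E) * (N * T ^+ 2) by ring.
  have -> : (8 * K) ^+ 2 = (2 * H * E) * (32 * H * Mm ^+ 3 * E).
    have -> : (8 * K) ^+ 2 = 64 * Mm ^+ 2 * r ^+ 2 * H ^+ 2 * E ^+ 2.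
      by rewrite /K; ring.
    rewrite hr2; ring.
  by apply: ler_wpM2l => //; rewrite !mulr_ge0 //; lra.
have hc : T * Wc <= 2 * K.
  apply: sq_le; first lra.
  have h1 : (T * Wc) ^+ 2 <= M ^+ 2.
    have hTW : 0 <= T * Wc by apply: mulr_ge0 => //; lra.
    by rewrite ler_sqr ?nnegrE.
  apply: (le_trans h1); apply: (le_trans e3).
  have h2 : 2 * H * N * Mm * E <= 2 * H * Mm * E * (2 * H * Mm ^+ 2 * E).
    have -> : 2 * H * N * Mm * E = (2 * H * Mm * E) * N by ring.
    by apply: ler_wpM2l => //; rewrite !mulr_ge0 //; lra.
  apply: (le_trans h2); rewrite le_eqVlt; apply/orP; left; apply/eqP.
  have -> : (2 * K) ^+ 2 = 4 * Mm ^+ 2 * r ^+ 2 * H ^+ 2 * E ^+ 2.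
    by rewrite /K; ring.
  rewrite hr2; ring.
have ha : T * Wa <= 2 * K.
  have h1 : T * Wa <= T * (2 * E) by apply: ler_wpM2l; lra.
  apply: (le_trans h1).
  have h2 : T <= Mm * r * H.
    have : Mm <= Mm * r by rewrite -[X in X <= _]mulr1; apply: ler_wpM2l.
    move=> h; have : Mm * r <= Mm * r * H.
      by rewrite -[X in X <= _]mulr1; apply: ler_wpM2l => //; apply: mulr_ge0; lra.
    lra.
  rewrite /K; have -> : T * (2 * E) = 2 * E * T by ring.
  have -> : 2 * (Mm * r * H * E) = 2 * E * (Mm * r * H) by ring.
  by apply: ler_wpM2l => //; lra.
have hT0 : 0 < T by lra.
have -> : 12 * (Mm * r * H / T) * E = (12 * K) / T by rewrite /K; field; lra.
rewrite ler_pdivlMr // mulrC.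
have -> : T * (Wa + (Wb + Wc)) = T * Wa + T * Wb + T * Wc by ring.
lra.
Qed.

Section Main.
Variable R : rcfType.
Variables n m t : nat.
Hypotheses (hn : (0<n)%N) (ht : (1<=t)%N) (htm : (t<=m)%N).
Variable Xh : 'I_m.
Variable s : topt_profile n m t.
Hypothesis hs : valid_topt s.
Variable u : 'I_n -> 'I_m -> R.
Hypothesis hu : is_utility u.
Variable pi : full_profile n m.
Hypothesis hext : extends s pi.
Hypothesis hmono : forall i X Y, (fpos (pi i) X < fpos (pi i) Y)%N -> u i Y <= u i X.

Let f i Y := fpos (pi i) Y.

Lemma f_inj i : injective (f i).
Proof. move=> Y Z; rewrite /f /fpos => /val_inj; exact: perm_inj. Qed.

Lemma f_pi i (j : 'I_m) : f i (pi i j) = j.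
Proof. by rewrite /f /fpos permK. Qed.

Lemma f_lt_m i Y : (f i Y < m)%N.
Proof. exact: ltn_ord. Qed.

Lemma in_topE i Y : in_top (s i) Y = (f i Y < t)%N.
Proof.
rewrite /in_top; apply/idP/idP.
  move/codomP=> [k ->]. rewrite /f hext. exact: ltn_ord.
move=> lt; apply/codomP; exists (Ordinal lt); apply: (f_inj i).
by rewrite /f hext.
Qed.

Lemma tposE i Y : (f i Y < t)%N -> tpos (s i) Y = f i Y.
Proof.
move=> lt; have -> : Y = s i (Ordinal lt).
  by apply: (f_inj i); rewrite /f hext.
rewrite /tpos codomE index_map; last exact: hs.
by rewrite index_enum_ord /f hext.
Qed.

Definition J i := minn t (f i Xh).

Lemma rep_prefE i Y : rep_pref (s i) Y Xh = (f i Y < J i)%N.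
Proof.
rewrite /rep_pref !in_topE /J leq_min.
case: (ltnP (f i Y) t) => //= hY.
case: (ltnP (f i Xh) t) => //= hX.
by rewrite tposE // tposE.
by apply/esym/(leq_trans hY).
Qed.


Let H : R := harm t.

Lemma harm_ge1 : 1 <= H.
Proof.
rewrite /H /harm; case: t ht => // t' _.
rewrite big_ord_recl /= invr1 lerDl; apply: sumr_ge0 => k _.
by rewrite invr_ge0.
Qed.

Lemma H_gt0 : 0 < H.
Proof. by apply: lt_le_trans harm_ge1. Qed.

Lemma pE i Y : @tth_p R _ _ (s i) Xh Y =
  if (f i Y < J i)%N then (2 * H * (f i Y).+1%:R)^-1
  else if Y == Xh then
    1 - \sum_(Z < m | (f i Z < J i)%N) (2 * H * (f i Z).+1%:R)^-1
  else 0.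
Proof.
rewrite /tth_p rep_prefE.
have hJ : forall Z, (f i Z < J i)%N -> trank (s i) Z = (f i Z).+1.
  move=> Z hZ; rewrite /trank tposE //; apply: (leq_trans hZ).
  by rewrite /J geq_minl.
case: ifP => hY; first by rewrite hJ.
case: ifP => // _; congr (_ - _).
apply: eq_big => Z; first by rewrite rep_prefE.
by move=> hZ; rewrite hJ // -rep_prefE.
Qed.

Lemma reindexf i (P : pred nat) (G : 'I_m -> R) :
  \sum_(Z < m | P (f i Z)) G Z = \sum_(j < m | P j) G (pi i j).
Proof.
rewrite (reindex_inj (@perm_inj _ (pi i))); apply: eq_bigl => j.
by rewrite f_pi.
Qed.

Lemma sum_narrow (F : nat -> R) k : (k <= m)%N ->
  \sum_(j < m | (j < k)%N) F j = \sum_(j < k) F j.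
Proof. by move=> hk; rewrite (big_ord_widen _ _ hk). Qed.

Lemma sum_harm i :
  \sum_(Z < m | (f i Z < J i)%N) ((f i Z).+1%:R)^-1 <= H.
Proof.
rewrite (reindexf i (fun j => (j < J i)%N) (fun Z => ((f i Z).+1%:R)^-1 : R)).
under eq_bigr do rewrite f_pi.
rewrite /H /harm -(@sum_narrow (fun j => ((j.+1%:R)^-1 : R)) t htm).
rewrite (big_mkcond (fun j : 'I_m => (j < J i)%N)) /=.
rewrite [X in _ <= X](big_mkcond (fun j : 'I_m => (j < t)%N)) /=.
apply: ler_sum => j _.
case: ifP => h1.
  by have -> : (j < t)%N by apply: (leq_trans h1); rewrite /J geq_minl.
by case: ifP => _ //; rewrite invr_ge0.
Qed.

Lemma p_Xh i : 1/2 <= @tth_p R _ _ (s i) Xh Xh.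
Proof.
rewrite pE.
have -> : (f i Xh < J i)%N = false by rewrite /J ltnNge geq_minr.
rewrite eqxx.
have h2 : \sum_(Z < m | (f i Z < J i)%N) (2 * H * (f i Z).+1%:R)^-1
     = (2 * H)^-1 * \sum_(Z < m | (f i Z < J i)%N) ((f i Z).+1%:R)^-1.
  by rewrite [RHS]mulr_sumr; apply: eq_bigr => Z _; rewrite invfM.
rewrite h2.
have hH := H_gt0.
have := sum_harm i; set S := \sum_(_ < _ | _) _ => hS.
have : (2 * H)^-1 * S <= (2 * H)^-1 * H.
  by rewrite ler_pM2l // invr_gt0 mulr_gt0.
have e : (2 * H)^-1 * H = 1/2.
  by rewrite invfM -mulrA mulVf ?gt_eqF // mulr1 div1r.
rewrite e => h; lra.
Qed.

Lemma p_ge0 i Y : 0 <= @tth_p R _ _ (s i) Xh Y.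
Proof.
case: (eqVneq Y Xh) => [->|hne].
  by apply: le_trans (p_Xh i); lra.
rewrite pE (negbTE hne); case: ifP => // _.
by rewrite invr_ge0 !mulr_ge0 // ltW // H_gt0.
Qed.


Lemma u_ge0 i Y : 0 <= u i Y.
Proof. by case: (hu i) => h _; apply: h. Qed.

Lemma u_sum i : \sum_(Y < m) u i Y = 1.
Proof. by case: (hu i). Qed.

Lemma u_sub i (P : pred 'I_m) : \sum_(Y < m | P Y) u i Y <= 1.
Proof.
rewrite -(u_sum i) [X in _ <= X](bigID P) /= lerDl.
by apply: sumr_ge0 => Y _; apply: u_ge0.
Qed.

Lemma mono_le i Y Z : (f i Y <= f i Z)%N -> u i Z <= u i Y.
Proof.
rewrite leq_eqVlt => /orP [/eqP e|lt]; last exact: hmono.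
by rewrite (f_inj i _ _ e).
Qed.

Lemma sum_cnt i k (c : R) : (k <= m)%N ->
  \sum_(Z < m | (f i Z < k)%N) c = k%:R * c.
Proof.
move=> hk.
rewrite (reindexf i (fun j => (j < k)%N) (fun _ => c)).
rewrite (@sum_narrow (fun _ => c) k hk) sumr_const card_ord.
by rewrite mulr_natl.
Qed.

Lemma u_le_pos i Y : u i Y <= ((f i Y).+1%:R)^-1.
Proof.
have hk : ((f i Y).+1 <= m)%N by apply: f_lt_m.
have h1 := u_sub i (fun Z => (f i Z < (f i Y).+1)%N).
have h2 : \sum_(Z < m | (f i Z < (f i Y).+1)%N) u i Y <=
          \sum_(Z < m | (f i Z < (f i Y).+1)%N) u i Z.
  by apply: ler_sum => Z hZ; apply: mono_le.
rewrite sum_cnt // in h2.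
have hp : (0 : R) < (f i Y).+1%:R by rewrite ltr0n.
rewrite -div1r ler_pdivlMr // mulrC.
apply: le_trans h2 h1.
Qed.

Let p i Y : R := tth_p (s i) Xh Y.
Let E : R := \sum_(Y < m) (n%:R^-1 * \sum_(i < n) p i Y) * SW u Y.

Lemma SW_ge0 Y : 0 <= SW u Y.
Proof. by apply: sumr_ge0 => i _; apply: u_ge0. Qed.

Lemma nE : n%:R * E = \sum_(Y < m) (\sum_(i < n) p i Y) * SW u Y.
Proof.
rewrite /E mulr_sumr; apply: eq_bigr => Y _.
by rewrite !mulrA mulfV ?mul1r // pnatr_eq0 -lt0n.
Qed.

Lemma cs_E (lam : R) (b : 'I_n -> 'I_m -> R) : 0 <= lam ->
  (forall i Y, 0 <= b i Y) -> (forall i Y, b i Y <= u i Y) ->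
  (forall i Y, lam * b i Y <= 2 * H * p i Y) ->
  lam * (\sum_(i < n) \sum_(Y < m) b i Y) ^+ 2 <= 2 * H * n%:R * m%:R * E.
Proof.
move=> hl hb0 hbu hbp.
set S := fun Y => \sum_(i < n) b i Y.
have hS : \sum_(i < n) \sum_(Y < m) b i Y = \sum_(Y < m) S Y.
  by rewrite exchange_big.
have h1 : lam * \sum_(Y < m) S Y ^+ 2 <= 2 * H * (n%:R * E).
  rewrite nE mulr_sumr [X in _ <= X]mulr_sumr; apply: ler_sum => Y _.
  rewrite expr2 mulrA mulrA.
  apply: ler_pM.
  - by rewrite mulr_ge0 // sumr_ge0.
  - by rewrite sumr_ge0.
  - rewrite /S mulr_sumr [X in _ <= X]mulr_sumr; apply: ler_sum => i _.
    exact: hbp.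
  - by apply: ler_sum => i _.
have h2 := @cs_sum R m S.
rewrite hS.
have hm : (0 : R) <= m%:R by rewrite ler0n.
have : lam * (\sum_(Y < m) S Y) ^+ 2 <= lam * (m%:R * \sum_(Y < m) S Y ^+ 2).
  by apply: ler_wpM2l.
move=> h3; apply: (le_trans h3).
rewrite mulrCA.
have -> : 2 * H * n%:R * m%:R * E = m%:R * (2 * H * (n%:R * E)) by ring.
by apply: ler_wpM2l.
Qed.

Lemma m_gt0 : (0 < m)%N.
Proof. exact: leq_trans ht htm. Qed.

Let o : 'I_m := Ordinal m_gt0.
Let top i := pi i o.

Lemma f_top i : f i (top i) = 0%N.
Proof. by rewrite /top f_pi. Qed.

Lemma u_top i : m%:R^-1 <= u i (top i).
Proof.
have h : \sum_(Y < m) u i Y <= \sum_(Y < m) u i (top i).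
  by apply: ler_sum => Y _; apply: mono_le; rewrite f_top.
rewrite u_sum sumr_const card_ord -mulr_natl in h.
have hp : (0 : R) < m%:R by rewrite ltr0n m_gt0.
by rewrite -div1r ler_pdivrMr // mulrC.
Qed.

Lemma p_top i : 1 <= 2 * H * p i (top i).
Proof.
have hH := harm_ge1.
case: (eqVneq (top i) Xh) => [e|hne].
  rewrite e; have := p_Xh i; rewrite -/(p i Xh) => h.
  nra.
rewrite /p pE f_top.
have -> : (0 < J i)%N.
  rewrite /J leq_min ht lt0n; apply/negP => /eqP h0.
  by move: hne; rewrite -(f_inj i _ _ (etrans (f_top i) (esym h0))) eqxx.
rewrite mulr1 mulfV //; apply: lt0r_neq0; apply: mulr_gt0 => //.
exact: H_gt0.
Qed.

Lemma sum_sub_const (P : pred 'I_m) (c : R) : 0 <= c ->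
  \sum_(Y < m | P Y) c <= m%:R * c.
Proof.
move=> hc; rewrite sumr_const -[c *+ _]mulr_natl; apply: ler_wpM2r => //.
by rewrite ler_nat; apply: (leq_trans (max_card _)); rewrite card_ord.
Qed.

Let mp i := \sum_(Y < m | (f i Y < J i)%N) u i Y.

Lemma mp_ge0 i : 0 <= mp i.
Proof. by apply: sumr_ge0 => Y _; apply: u_ge0. Qed.

Lemma UB0 i : t%:R <= 2 * m%:R * mp i + 2 * m%:R * t%:R * u i Xh.
Proof.
have hsplit := u_sum i.
rewrite (bigID (fun Y => (f i Y < J i)%N)) /= -/(mp i) in hsplit.
set rest := \sum_(Y < m | ~~ (f i Y < J i)%N) u i Y in hsplit.
have htm' : (t%:R : R) <= m%:R by rewrite ler_nat.
have ht0 : (0 : R) <= t%:R by rewrite ler0n.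
have hmp := mp_ge0 i.
have hux : 0 <= u i Xh := u_ge0 i Xh.
case: (ltnP (f i Xh) t) => hX.
  have hJ : J i = f i Xh by rewrite /J; apply/minn_idPr/ltnW.
  have hr : rest <= m%:R * u i Xh.
    apply: (@le_trans _ _ (\sum_(Y < m | ~~ (f i Y < J i)%N) u i Xh)).
      by apply: ler_sum => Y; rewrite hJ -leqNgt => hY; apply: mono_le.
    exact: sum_sub_const.
  nra.
have hJ : J i = t by rewrite /J; apply/minn_idPl.
have hr : t%:R * rest <= m%:R * mp i.
  rewrite /rest mulr_sumr.
  apply: (@le_trans _ _ (\sum_(Y < m | ~~ (f i Y < J i)%N) mp i)).
    apply: ler_sum => Y; rewrite hJ -leqNgt => hY.
    rewrite -(sum_cnt i t (u i Y) htm) /mp hJ; apply: ler_sum => Z hZ.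
    by apply: mono_le; apply: ltnW; apply: leq_trans hZ hY.
  exact: sum_sub_const.
have h1 : t%:R * mp i <= m%:R * mp i by apply: ler_wpM2r.
have h2 : 0 <= m%:R * t%:R * u i Xh by rewrite !mulr_ge0 // ler0n.
have e : t%:R = t%:R * mp i + t%:R * rest by rewrite -mulrDr hsplit mulr1.
lra.
Qed.

Lemma term_ge0 Y : 0 <= (n%:R^-1 * \sum_(i < n) p i Y) * SW u Y.
Proof.
apply: mulr_ge0; last exact: SW_ge0.
apply: mulr_ge0; first by rewrite invr_ge0 ler0n.
by apply: sumr_ge0 => i _; apply: p_ge0.
Qed.

Lemma E_ge0 : 0 <= E.
Proof. by apply: sumr_ge0 => Y _; apply: term_ge0. Qed.

Lemma term_le Y : (n%:R^-1 * \sum_(i < n) p i Y) * SW u Y <= E.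
Proof.
rewrite /E (bigD1 Y) //= lerDl.
by apply: sumr_ge0 => Z _; apply: term_ge0.
Qed.

Lemma nterm_le Y : (\sum_(i < n) p i Y) * SW u Y <= n%:R * E.
Proof.
have hn' : (0 : R) < n%:R by rewrite ltr0n.
have := term_le Y; rewrite -mulrA.
by rewrite ler_pdivrMl // => h.
Qed.

Lemma E1 : SW u Xh <= 2 * E.
Proof.
have h := nterm_le Xh.
have hp : n%:R * (1/2) <= \sum_(i < n) p i Xh.
  have -> : n%:R * (1/2) = \sum_(i < n) (1/2 : R).
    by rewrite sumr_const card_ord mulr_natl.
  by apply: ler_sum => i _; apply: p_Xh.
have hn' : (0 : R) < n%:R by rewrite ltr0n.
have hsw := SW_ge0 Xh.
have : n%:R * (1/2) * SW u Xh <= n%:R * E.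
  by apply: le_trans h; apply: ler_wpM2r.
nra.
Qed.

Lemma p_in i Y : (f i Y < J i)%N -> 2 * H * p i Y = ((f i Y).+1%:R)^-1.
Proof.
move=> hY; rewrite /p pE hY invfM mulrA mulfV // .
  by rewrite mul1r.
by apply: lt0r_neq0; rewrite mulr_gt0 // H_gt0.
Qed.

Definition Pb X i := (f i X < f i Xh)%N && (f i X < t)%N.

Lemma E2 X : (\sum_(i < n | Pb X i) u i X) * SW u X <= 2 * H * n%:R * E.
Proof.
have h := nterm_le X.
have hsw := SW_ge0 X.
have hb : \sum_(i < n | Pb X i) u i X <= 2 * H * \sum_(i < n) p i X.
  rewrite (mulr_sumr _ _ _ (2 * H)) [Z in _ <= Z](bigID (Pb X)) /=.
  apply: ler_wpDr; first by apply: sumr_ge0 => i _; rewrite !mulr_ge0 // ?p_ge0 // ltW // H_gt0.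
  apply: ler_sum => i /andP [h1 h2].
  rewrite p_in; first exact: u_le_pos.
  by rewrite /J leq_min h1 h2.
have hH := H_gt0.
apply: (le_trans (ler_wpM2r hsw hb)).
have h2H : 0 <= 2 * H by rewrite mulr_ge0 // ltW.
have := ler_wpM2l h2H h; by rewrite !mulrA.
Qed.

Let M := \sum_(i < n) mp i.

Lemma E3 : M ^+ 2 <= 2 * H * n%:R * m%:R * E.
Proof.
have eM : \sum_(i < n) \sum_(Y < m) (if (f i Y < J i)%N then u i Y else 0) = M.
  by apply: eq_bigr => i _; rewrite /mp [RHS]big_mkcond.
rewrite -eM -[X in X <= _]mul1r.
apply: (@cs_E 1 (fun i Y => if (f i Y < J i)%N then u i Y else 0) ler01).
- by move=> i Y; case: ifP => // _; apply: u_ge0.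
- by move=> i Y; case: ifP => // _; apply: u_ge0.
- move=> i Y; rewrite mul1r; case: ifP => hY.
    by rewrite p_in //; apply: u_le_pos.
  by rewrite !mulr_ge0 // ?p_ge0 // ltW // H_gt0.
Qed.

Lemma E4 : n%:R <= 2 * H * m%:R ^+ 2 * E.
Proof.
have hm : (0 : R) < m%:R by rewrite ltr0n m_gt0.
have hN : (0 : R) < n%:R by rewrite ltr0n.
have eb : \sum_(i < n) \sum_(Y < m) (if Y == top i then (m%:R : R)^-1 else 0)
        = n%:R * m%:R^-1.
  have -> : n%:R * m%:R^-1 = \sum_(i < n) (m%:R : R)^-1.
    by rewrite sumr_const card_ord mulr_natl.
  apply: eq_bigr => i _.
  rewrite (bigD1 (top i)) //= eqxx big1 ?addr0 // => Y /negbTE ->.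
  done.
have h : (m%:R : R) * (\sum_(i < n) \sum_(Y < m)
   (if Y == top i then (m%:R : R)^-1 else 0)) ^+ 2 <= 2 * H * n%:R * m%:R * E.
  apply: cs_E.
  - by rewrite ltW.
  - by move=> i Y; case: ifP => // _; rewrite invr_ge0 ltW.
  - move=> i Y; case: eqP => [->|_]; first exact: u_top.
    exact: u_ge0.
  - move=> i Y; case: eqP => [->|_].
      by rewrite mulfV ?gt_eqF //; apply: p_top.
    by rewrite mulr0 !mulr_ge0 // ?p_ge0 // ltW // H_gt0.
rewrite eb in h.
have e : m%:R * (n%:R * m%:R^-1) ^+ 2 = n%:R * (n%:R * m%:R^-1) :> R.
  by field; rewrite gt_eqF.
rewrite e in h.
have e2 : 2 * H * n%:R * m%:R * E = n%:R * (2 * H * m%:R * E) by ring.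
rewrite e2 ler_pM2l // ler_pdivrMr // in h.
have e3 : 2 * H * m%:R * E * m%:R = 2 * H * m%:R ^+ 2 * E by ring.
by rewrite -e3.
Qed.

Definition Pc X i := (f i X < f i Xh)%N && ~~ (f i X < t)%N.

Lemma E5 X : t%:R * \sum_(i < n | Pc X i) u i X <= M.
Proof.
rewrite mulr_sumr /M [Z in _ <= Z](bigID (Pc X)) /=.
apply: ler_wpDr; first by apply: sumr_ge0 => i _; apply: mp_ge0.
apply: ler_sum => i /andP [h1 h2]; rewrite -leqNgt in h2.
have hJ : J i = t.
  by rewrite /J; apply/minn_idPl; apply: leq_trans h2 (ltnW h1).
rewrite -(sum_cnt i t (u i X) htm) /mp hJ; apply: ler_sum => Z hZ.
by apply: mono_le; apply: ltnW; apply: leq_trans hZ h2.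
Qed.

Lemma E6 : n%:R * t%:R <= 2 * m%:R * M + 2 * m%:R * t%:R * SW u Xh.
Proof.
have h : \sum_(i < n) (t%:R : R) <= \sum_(i < n) (2 * m%:R * mp i + 2 * m%:R * t%:R * u i Xh).
  by apply: ler_sum => i _; apply: UB0.
rewrite sumr_const card_ord big_split /= -!mulr_sumr in h.
rewrite -[(t%:R : R) *+ n]mulr_natl in h. exact: h.
Qed.

Lemma main_bound X :
  SW u X <= 12 * (m%:R * Num.sqrt m%:R * H / t%:R) * E.
Proof.
set W := SW u X.
set Wa := \sum_(i < n | (f i Xh <= f i X)%N) u i X.
set Wb := \sum_(i < n | Pb X i) u i X.
set Wc := \sum_(i < n | Pc X i) u i X.
have hW : W = Wa + (Wb + Wc).
  rewrite /W /SW (bigID (fun i => (f i Xh <= f i X)%N)) /=; congr (_ + _).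
  rewrite (bigID (fun i => (f i X < t)%N)) /=; congr (_ + _); apply: eq_bigl => i.
    by rewrite /Pb -ltnNge.
  by rewrite /Pc -ltnNge.
have hWa : Wa <= SW u Xh.
  apply: (@le_trans _ _ (\sum_(i < n | (f i Xh <= f i X)%N) u i Xh)).
    by apply: ler_sum => i hi; apply: mono_le.
  rewrite /SW [Z in _ <= Z](bigID (fun i => (f i Xh <= f i X)%N)) /= lerDl.
  by apply: sumr_ge0 => i _; apply: u_ge0.
have hWa0 : 0 <= Wa by apply: sumr_ge0 => i _; apply: u_ge0.
have hWb0 : 0 <= Wb by apply: sumr_ge0 => i _; apply: u_ge0.
have hWc0 : 0 <= Wc by apply: sumr_ge0 => i _; apply: u_ge0.
have hM0 : 0 <= M by apply: sumr_ge0 => i _; apply: mp_ge0.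
have e2 : Wb * W <= 2 * H * n%:R * E := E2 X.
rewrite hW in e2 *.
have h1 : (0 : R) < n%:R by rewrite ltr0n.
have h2 : (1 : R) <= t%:R by rewrite ler1n.
have h3 : (t%:R : R) <= m%:R by rewrite ler_nat.
exact: (@final_alg R _ _ _ _ _ _ _ _ _ _ h1 h2 h3 harm_ge1 E_ge0 hM0 (SW_ge0 Xh) hWa0 hWb0 hWc0
  hWa E1 e2 E3 E4 (E5 X) E6).
Qed.

End Main.

Theorem mainTheorem13 (R : rcfType) :
  exists C : R, 0 < C /\
  forall (n m t : nat), (0 < n)%N -> (1 <= t)%N -> (t <= m)%N ->
  forall g : topt_profile n m t -> 'I_m,
    metric_distortion_le g (6 * m%:R / t%:R + 1 : R) ->
  forall s : topt_profile n m t, valid_topt s ->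
  forall u : 'I_n -> 'I_m -> R, is_utility u -> util_consistent s u ->
  forall X : 'I_m,
    SW u X <= C * (m%:R * Num.sqrt (m%:R) * harm t / t%:R) * expected_SW g s u.
Proof.
exists 12; split; first by [].
move=> n m t hn ht htm g _ s hs u hu [pi [hext hmono]] X.
exact: (@main_bound R n m t hn ht htm (g s) s hs u hu pi hext hmono X).
Qed.
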